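(* Let $\Pi$ be a set of similarities on a set $\Omega$ which is a monoid with involution, write $\approx$ for $\approx_\Pi$, and let $\pi\in\Pi$. Then: (1) $\pi/\!\approx\;=\{([a],[b]):a\pi b\}$ is a permutation of $\Omega/\!\approx$; (2) if $R\subseteq\Omega^k$ is invariant under $\approx$ then $R\,\pi\,\pi(R)$; (3) if moreover $\approx_\Pi\in\Pi$, then for every ordinal $\alpha$, all $\bar a,\bar b\in\Omega^\alpha$ with $\bar a\,\pi\,\bar b$, and every formula $\phi(\bar x)$ of $\mathscr L^-_{\infty\infty}(\mathrm{Inv}(\Pi))$: $\Omega,\mathrm{Inv}(\Pi)\models\phi(\bar a)\iff\Omega,\mathrm{Inv}(\Pi)\models\phi(\bar b)$.
   Context: A similarity on $\Omega$ is a relation $\pi\subseteq\Omega\times\Omega$ such that every $a$ has some $b$ with $a\pi b$ and every $b$ has some $a$ with $a\pi b$; $\bar a\,\pi\,\bar b$ means coordinatewise relatedness; for $R,S\subseteq\Omega^k$, $R\,\pi\,S$ means $\bar a\pi\bar b$ implies ($\bar a\in R\iff\bar b\in S$); $\pi(R)=\{\bar b:\exists\bar a\in R,\ \bar a\pi\bar b\}$. $\Pi$ is a monoid with involution if closed under relational composition and converses. $a\approx_\Pi b$ iff for every finite $k$ and every $\bar c\in\Omega^k$ there is $\pi\in\Pi$ with $(a,\bar c)\,\pi\,(b,\bar c)$. $R$ is invariant under $\pi$ (resp. $\approx$) if $\bar a\pi\bar b$ (resp. $\bar a\approx\bar b$) implies $\bar a\in R\iff\bar b\in R$. A quantifier on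 $\Omega$ is a subset of $\mathcal P(\Omega^{k_1})\times\cdots\times\mathcal P(\Omega^{k_l})$; it is $\approx$-invariant under $\pi$ if for all $\bar R,\bar S$ of its type with every component invariant under $\approx$ and $R_i\,\pi\,S_i$ for all $i$: $\bar R\in Q\iff\bar S\in Q$. $\mathrm{Inv}(\Pi)$ is the set of all finitary relations invariant under every $\pi\in\Pi$ and all quantifiers $\approx_\Pi$-invariant under every $\pi\in\Pi$. $\mathscr L^-_{\infty\infty}(\mathrm{Inv}(\Pi))$ is the equality-free infinitary logic with predicate symbols and Lindström quantifier symbols for these, interpreted in $\Omega$. *)

(* Defs.v *)
From mathcomp Require Import all_boot.
Set Implicit Arguments. Unset Strict Implicit. Unset Printing Implicit Defensive.

Definition brel (Omega : Type) := Omega -> Omega -> Prop.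
Definition tup (Omega : Type) (k : nat) := 'I_k -> Omega.

Definition is_similarity (Omega : Type) (p : brel Omega) : Prop :=
  (forall a, exists b, p a b) /\ (forall b, exists a, p a b).

Definition rcomp (Omega : Type) (p q : brel Omega) : brel Omega :=
  fun a c => exists b, p a b /\ q b c.
Definition rconv (Omega : Type) (p : brel Omega) : brel Omega :=
  fun a b => p b a.

Definition sim_monoid_inv (Omega : Type) (Pi : brel Omega -> Prop) : Prop :=
  (forall p, Pi p -> is_similarity p) /\
  (forall p q, Pi p -> Pi q -> Pi (rcomp p q)) /\
  (forall p, Pi p -> Pi (rconv p)).

Definition trel (Omega I : Type) (p : brel Omega) (a b : I -> Omega) : Prop :=
  forall i, p (a i) (b i).

Definition approx (Omega : Type) (Pi : brel Omega -> Prop) : brel Omega :=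
  fun a b => forall (k : nat) (c : tup Omega k),
    exists p, Pi p /\ p a b /\ trel p c c.

Definition rel_sim (Omega : Type) (k : nat) (p : brel Omega)
  (R S : tup Omega k -> Prop) : Prop :=
  forall a b, trel p a b -> (R a <-> S b).

Definition rimage (Omega : Type) (k : nat) (p : brel Omega)
  (R : tup Omega k -> Prop) : tup Omega k -> Prop :=
  fun b => exists a, R a /\ trel p a b.

Definition invariant_under (Omega : Type) (k : nat) (p : brel Omega)
  (R : tup Omega k -> Prop) : Prop :=
  forall a b, trel p a b -> (R a <-> R b).

Definition inv_rel (Omega : Type) (Pi : brel Omega -> Prop) (k : nat)
  (R : tup Omega k -> Prop) : Prop :=
  forall p, Pi p -> invariant_under p R.

Definition quantifier (Omega : Type) (l : nat) (ks : 'I_l -> nat) :=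
  (forall i : 'I_l, tup Omega (ks i) -> Prop) -> Prop.

Definition qinv_under (Omega : Type) (Pi : brel Omega -> Prop) (p : brel Omega)
  (l : nat) (ks : 'I_l -> nat) (Q : quantifier Omega ks) : Prop :=
  forall Rs Ss : forall i : 'I_l, tup Omega (ks i) -> Prop,
    (forall i, invariant_under (approx Pi) (Rs i)) ->
    (forall i, invariant_under (approx Pi) (Ss i)) ->
    (forall i, rel_sim p (Rs i) (Ss i)) ->
    (Q Rs <-> Q Ss).

Definition inv_quant (Omega : Type) (Pi : brel Omega -> Prop)
  (l : nat) (ks : 'I_l -> nat) (Q : quantifier Omega ks) : Prop :=
  forall p, Pi p -> qinv_under Pi p Q.

(* Equality-free infinitary logic L^-_{oo oo}(Inv(Pi)); formulas are indexed
   by their type of (free) variables V. *)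
Inductive formula (Omega : Type) (Pi : brel Omega -> Prop) : Type -> Type :=
| FRel : forall (V : Type) (k : nat) (R : tup Omega k -> Prop),
    inv_rel Pi R -> ('I_k -> V) -> formula Pi V
| FNeg : forall (V : Type), formula Pi V -> formula Pi V
| FAnd : forall (V : Type) (J : Type), (J -> formula Pi V) -> formula Pi V
| FEx  : forall (V : Type) (W : Type), formula Pi (V + W) -> formula Pi V
| FQ   : forall (V : Type) (l : nat) (ks : 'I_l -> nat) (Q : quantifier Omega ks),
    inv_quant Pi Q -> (forall i : 'I_l, formula Pi (V + 'I_(ks i))) -> formula Pi V.

Definition join (Omega V W : Type) (a : V -> Omega) (c : W -> Omega) :
  V + W -> Omega := fun x => match x with inl v => a v | inr w => c w end.

Fixpoint sat (Omega : Type) (Pi : brel Omega -> Prop) (V : Type)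
  (phi : formula Pi V) {struct phi} : (V -> Omega) -> Prop :=
  match phi in formula _ V0 return (V0 -> Omega) -> Prop with
  | FRel _ _ R _ v => fun a => R (fun j => a (v j))
  | FNeg _ f => fun a => ~ sat f a
  | FAnd _ J fs => fun a => forall j : J, sat (fs j) a
  | FEx _ W f => fun a => exists c : W -> Omega, sat f (join a c)
  | FQ _ l ks Q _ fs => fun a => Q (fun i c => sat (fs i) (join a c))
  end.

Definition cls (Omega : Type) (Pi : brel Omega -> Prop) (a : Omega) : Omega -> Prop :=
  fun x => approx Pi a x.
Definition quot (Omega : Type) (Pi : brel Omega -> Prop) : (Omega -> Prop) -> Prop :=
  fun C => exists a, C = cls Pi a.
Definition quot_rel (Omega : Type) (Pi : brel Omega -> Prop) (p : brel Omega) :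
  (Omega -> Prop) -> (Omega -> Prop) -> Prop :=
  fun C D => exists a b, p a b /\ C = cls Pi a /\ D = cls Pi b.

Definition is_perm_of (X : Type) (S : X -> Prop) (F : X -> X -> Prop) : Prop :=
  (forall C D, F C D -> S C /\ S D) /\
  (forall C, S C -> exists! D, F C D) /\
  (forall D, S D -> exists! C, F C D).

(* Main.v *)
Require Import Defs.
From mathcomp Require Import all_boot.
From Stdlib Require Import IndefiniteDescription FunctionalExtensionality PropExtensionality.

Set Implicit Arguments. Unset Strict Implicit.

Lemma choice_fun (A B : Type) (R : A -> B -> Prop) :
  (forall x, exists y, R x y) -> exists f : A -> B, forall x, R x (f x).
Proof.
  intros H. exists (fun x => proj1_sig (constructive_indefinite_description _ (H x))).
  intros x. exact (proj2_sig _).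
Qed.

Lemma approx_refl (Omega : Type) (Pi : brel Omega -> Prop)
  (HPi : sim_monoid_inv Pi) (p : brel Omega) (Hp : Pi p) a : approx Pi a a.
Proof.
  destruct HPi as [Hs [Hc Hv]].
  intros k c. exists (rcomp p (rconv p)). split; [apply Hc; auto|].
  assert (H : forall x, rcomp p (rconv p) x x).
  { intros x. destruct (proj1 (Hs p Hp) x) as [y Hy]. exists y; split; auto. }
  split; auto. intros i; auto.
Qed.

Lemma approx_sym (Omega : Type) (Pi : brel Omega -> Prop)
  (HPi : sim_monoid_inv Pi) a b : approx Pi a b -> approx Pi b a.
Proof.
  destruct HPi as [Hs [Hc Hv]]. intros H k c.
  destruct (H k c) as [q [Hq [Hab Hcc]]].
  exists (rconv q). split; [apply Hv; auto|]. split; [exact Hab|]. intros i; exact (Hcc i).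
Qed.

Lemma approx_trans (Omega : Type) (Pi : brel Omega -> Prop)
  (HPi : sim_monoid_inv Pi) a b c : approx Pi a b -> approx Pi b c -> approx Pi a c.
Proof.
  destruct HPi as [Hs [Hc Hv]]. intros H1 H2 k d.
  destruct (H1 k d) as [q1 [Hq1 [Hab1 Hcc1]]].
  destruct (H2 k d) as [q2 [Hq2 [Hab2 Hcc2]]].
  exists (rcomp q1 q2). split; [apply Hc; auto|]. split.
  - exists b; auto.
  - intros i. exists (d i); auto.
Qed.

Lemma transfer (Omega : Type) (Pi : brel Omega -> Prop)
  (HPi : sim_monoid_inv Pi) q (Hq : Pi q) a1 b1 a2 b2 :
  q a1 b1 -> q a2 b2 -> approx Pi a1 a2 -> approx Pi b1 b2.
Proof.
  destruct HPi as [Hs [Hc Hv]]. intros H1 H2 H k c.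
  destruct (choice_fun (R:=fun (i : 'I_k) d => q d (c i))) as [d Hd].
  { intros i. exact (proj2 (Hs q Hq) (c i)). }
  destruct (H k d) as [r [Hr [Hra Hrd]]].
  exists (rcomp (rconv q) (rcomp r q)). split.
  { apply Hc; [apply Hv; auto | apply Hc; auto]. }
  split.
  - exists a1; split; [exact H1|]. exists a2; split; auto.
  - intros i. exists (d i). split; [exact (Hd i)|]. exists (d i). split; [exact (Hrd i)|exact (Hd i)].
Qed.

Lemma cls_eq (Omega : Type) (Pi : brel Omega -> Prop)
  (HPi : sim_monoid_inv Pi) a b : approx Pi a b -> cls Pi a = cls Pi b.
Proof.
  intros H. apply functional_extensionality. intros x.
  apply propositional_extensionality. unfold cls. split; intros H'.
  - apply (approx_trans HPi (approx_sym HPi H) H').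
  - apply (approx_trans HPi H H').
Qed.

Lemma cls_eq_inv (Omega : Type) (Pi : brel Omega -> Prop)
  (HPi : sim_monoid_inv Pi) (p : brel Omega) (Hp : Pi p) a b :
  cls Pi a = cls Pi b -> approx Pi a b.
Proof.
  intros H. assert (Hb : cls Pi b b) by (apply (approx_refl HPi Hp)).
  rewrite <- H in Hb. exact Hb.
Qed.

Lemma sat_inv (Omega : Type) (Pi : brel Omega -> Prop)
  (HPi : sim_monoid_inv Pi) (Happ : Pi (approx Pi)) V (phi : formula Pi V) :
  forall q, Pi q -> forall a b, trel q a b -> (sat phi a <-> sat phi b).
Proof.
  pose proof HPi as [Hs [Hc Hv]].
  induction phi as [V k R HR v | V f IH | V J fs IH | V W f IH | V l ks Q HQ fs IH];
    intros q Hq a b Hab; simpl.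
  - apply (HR q Hq). intros j; apply Hab.
  - pose proof (IH q Hq a b Hab); tauto.
  - split; intros H j; apply (IH j q Hq a b Hab); auto.
  - split.
    + intros [c Hcs].
      destruct (choice_fun (R:=fun w d => q (c w) d)) as [d Hd].
      { intros w. exact (proj1 (Hs q Hq) (c w)). }
      exists d. apply (IH q Hq (join a c) (join b d)); [|exact Hcs].
      intros [x|x]; simpl; auto.
    + intros [d Hds].
      destruct (choice_fun (R:=fun w c => q c (d w))) as [c Hcd].
      { intros w. exact (proj2 (Hs q Hq) (d w)). }
      exists c. apply (IH q Hq (join a c) (join b d)); [|exact Hds].
      intros [x|x]; simpl; auto.
  - apply (HQ q Hq).
    + intros i x y Hxy. apply (IH i (approx Pi) Happ).
      intros [z|z]; simpl; [apply (approx_refl HPi Hq)| apply Hxy].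
    + intros i x y Hxy. apply (IH i (approx Pi) Happ).
      intros [z|z]; simpl; [apply (approx_refl HPi Hq)| apply Hxy].
    + intros i x y Hxy. apply (IH i q Hq).
      intros [z|z]; simpl; auto.
Qed.

Unset Implicit Arguments. Set Strict Implicit.

Theorem lemma14 (Omega : Type) (Pi : brel Omega -> Prop)
  (HPi : sim_monoid_inv Pi) (p : brel Omega) (Hp : Pi p) :
  is_perm_of (quot Pi) (quot_rel Pi p) /\
  (forall (k : nat) (R : tup Omega k -> Prop),
      invariant_under (approx Pi) R -> rel_sim p R (rimage p R)) /\
  (Pi (approx Pi) ->
    forall (I : Type) (a b : I -> Omega), trel p a b ->
    forall phi : formula Pi I, sat phi a <-> sat phi b).
Proof.
  pose proof HPi as [Hs [Hc Hv]].
  split; [|split].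
  - split; [|split].
    + intros C D [a [b [_ [-> ->]]]]. split; eexists; eauto.
    + intros C [a ->]. destruct (proj1 (Hs p Hp) a) as [b Hb].
      exists (cls Pi b). split.
      * exists a, b; auto.
      * intros D [a' [b' [Hab' [Ha' ->]]]]. apply (cls_eq HPi).
        apply (transfer HPi Hp Hb Hab'). exact (cls_eq_inv HPi Hp Ha').
    + intros D [b ->]. destruct (proj2 (Hs p Hp) b) as [a Ha].
      exists (cls Pi a). split.
      * exists a, b; auto.
      * intros C [a' [b' [Hab' [-> Hb']]]]. apply (cls_eq HPi).
        apply (transfer (q := rconv p) HPi (Hv p Hp) Ha Hab').
        exact (cls_eq_inv HPi Hp Hb').
  - intros k R HR a b Hab; split.
    + intros Ha. exists a; auto.
    + intros [a' [Ha' Ha'b]]. refine (proj1 (HR a' a _) Ha').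
      intros i. apply (transfer (q := rconv p) HPi (Hv p Hp) (Ha'b i) (Hab i)).
      apply (approx_refl HPi Hp).
  - intros Happ I a b Hab phi. exact (sat_inv HPi Happ phi Hp Hab).
Qed.
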